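(* Let $F$ be a $4$-regular graph, let $P$ be a circuit partition of $F$, and let $E\subseteq E(F)$ be such that each circuit of $P$ traverses at most one edge of $E$. If $\Gamma$ is a cycle spanning set of $F-E$, then $\Gamma\cup P$ (with the circuits of $P$ given arbitrary orientations) is a cycle spanning set of $F$. If moreover $\Gamma$ is integral, then $\Gamma\cup P$ is an integral cycle spanning set of $F$.
   Context: Graphs: $G=(V,H,E,\epsilon)$ with finite sets of vertices $V$ and half-edges $H$, a partition $E$ of $H$ into unordered pairs (edges), and $\epsilon:H\to V$; loops and multiple edges allowed. For $E'\subseteq E(G)$, $G-E'$ is obtained by deleting the edges of $E'$. A directed version orders each edge as (tail, head). A single transition is an unordered pair of distinct half-edges incident with a common vertex; a directed single transition is such an ordered pair. A closed walk is a sequence $((h_1,h_2),\dots,(h_{n-1},h_n))$ of directed single transitions with $\{h_2,h_3\},\{h_4,h_5\},\dots,\{h_n,h_1\}$ edges, up to cyclic shift. For a directed version $D$ and closed walk $W$, $\sigma(D,W)\in\mathbb Z^{E}$ counts, at each edge $e$, traversals of $e$ along its direction minus traversals against it. A circuit is a nonempty closed walk using each half-edge at most once, with orientation forgotten. The cycle space of $D$ is the right null space over $\mathbb Q$ of its vertex-edge incidence matrix (entry $1$ if $v$ is incident to the tail but not head of $e$, $-1$ if to the head but not tail, $0$ otherwise). A cycle basis of $G$ is a set $B$ of closed walks such that the vectors $\sigma(D,W)$, $W\in B$, are pairwise distinct and form a basis of the cycle space of $D$. A cycle spanning set is a set of closed walks containing a cycle basis. A cycle spanning set $B$ is integral if $\sigma(D,W)$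 lies in the $\mathbb Z$-span of $\{\sigma(D,W'):W'\in B\}$ for every closed walk $W$ of $G$. $F$ is $4$-regular if every vertex is incident with exactly $4$ half-edges. A circuit partition $P$ of $F$ is a set of circuits of $F$ such that every half-edge lies in exactly one single transition of exactly one circuit of $P$. *)

(* Defs.v *)
From HB Require Import structures.
From mathcomp Require Import all_boot all_order all_algebra.
Set Implicit Arguments. Unset Strict Implicit. Unset Printing Implicit Defensive.
Import Order.TTheory GRing.Theory Num.Theory.
Local Open Scope ring_scope.

(* A graph G = (V, H, E, eps): finite types V (vertices) and H (half-edges),
   the partition E of H into unordered pairs is encoded by the fixed-point-free
   involution [inv] sending a half-edge to the other half-edge of its edge,
   and [eps : H -> V]. *)
Section Graphs.
Variables (V H : finType) (inv : H -> H) (eps : H -> V).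

Definition is_graph := involutive inv /\ (forall h, inv h != h).

Definition edge_of (h : H) : {set H} := [set h; inv h].
Definition gedges : {set {set H}} := [set edge_of h | h : H].
Definition edge_t := {e : {set H} | e \in gedges}.

Definition four_regular := forall v : V, #|[set h | eps h == v]| = 4%N.

(* directed version: D h = true iff h is the tail half-edge of its edge *)
Definition orientation (D : H -> bool) := forall h, D (inv h) = ~~ D h.

(* closed walk ((a1,b1),...,(ak,bk)) : each (ai,bi) a directed single
   transition, and {b_i, a_(i+1)} (indices cyclic) an edge. *)
Definition dtransition (p : H * H) := (p.1 != p.2) && (eps p.1 == eps p.2).
Definition closed_walk (W : seq (H * H)) :=
  all dtransition W && (map fst (rot 1 W) == map (fun p => inv p.2) W).

Definition halfedges (W : seq (H * H)) : seq H :=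
  flatten (map (fun p => [:: p.1; p.2]) W).

(* circuit (with an arbitrary orientation / starting point chosen) *)
Definition circuit (W : seq (H * H)) :=
  [&& closed_walk W, W != [::] & uniq (halfedges W)].

Definition circuit_partition (P : seq (seq (H * H))) :=
  (forall W, W \in P -> circuit W) /\
  (forall h, count (fun W => h \in halfedges W) P = 1%N).

(* edge e is traversed by W: the traversal from b_i to a_(i+1) = inv b_i *)
Definition traverses (W : seq (H * H)) (e : {set H}) := has (fun p => p.2 \in e) W.

Definition sigma (D : H -> bool) (W : seq (H * H)) : {ffun edge_t -> int} :=
  [ffun e : edge_t => \sum_(p <- W | p.2 \in val e) (if D p.2 then 1 else -1 : int)].

Definition sigmaQ (D : H -> bool) (W : seq (H * H)) : {ffun edge_t -> rat^o} :=
  [ffun e : edge_t => ((sigma D W e)%:~R : rat)].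

Definition incidence (D : H -> bool) (v : V) (e : edge_t) : rat :=
  if [pick h in val e | D h] is Some t then
    let hd := inv t in
    if (eps t == v) && (eps hd != v) then 1
    else if (eps hd == v) && (eps t != v) then -1 else 0
  else 0.

Definition in_cycle_space (D : H -> bool) (x : {ffun edge_t -> rat^o}) :=
  forall v : V, \sum_(e : edge_t) incidence D v e * x e = 0.

Definition cycle_basis_wrt (D : H -> bool) (s : seq (seq (H * H))) :=
  [/\ all closed_walk s, uniq (map (sigmaQ D) s), free (map (sigmaQ D) s)
    & forall x, x \in <<map (sigmaQ D) s>>%VS <-> in_cycle_space D x].

Definition cycle_spanning_wrt (D : H -> bool) (B : seq (H * H) -> Prop) :=
  (forall W, B W -> closed_walk W) /\
  exists s, (forall W, W \in s -> B W) /\ cycle_basis_wrt D s.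

Definition integral_wrt (D : H -> bool) (B : seq (H * H) -> Prop) :=
  forall W, closed_walk W ->
    exists (s : seq (seq (H * H))) (c : nat -> int),
      (forall W', W' \in s -> B W') /\
      sigma D W = \sum_(i < size s) sigma D (nth [::] s i) *~ c i.

Definition cycle_spanning (B : seq (H * H) -> Prop) :=
  forall D, orientation D -> cycle_spanning_wrt D B.

Definition integral_cycle_spanning (B : seq (H * H) -> Prop) :=
  cycle_spanning B /\ forall D, orientation D -> integral_wrt D B.

Definition del_H (E' : {set {set H}}) := {h : H | edge_of h \notin E'}.
Definition del_inv (E' : {set {set H}}) (h : del_H E') : del_H E' :=
  insubd h (inv (val h)).
Definition del_eps (E' : {set {set H}}) (h : del_H E') : V := eps (val h).

Definition lift_walk (E' : {set {set H}}) (W : seq (del_H E' * del_H E')) :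
  seq (H * H) := map (fun p => (val p.1, val p.2)) W.

End Graphs.

Arguments del_H {H} inv E'.
Arguments del_inv {H} inv E' h.
Arguments del_eps {V H} inv eps E' h.
Arguments lift_walk {H} inv E' W.
Arguments cycle_spanning {V H} inv eps B.
Arguments integral_cycle_spanning {V H} inv eps B.
Arguments circuit_partition {V H} inv eps P.
Arguments four_regular {V H} eps.
Arguments is_graph {H} inv.
Arguments gedges {H} inv.
Arguments traverses {H} W e.

(* Main.v *)
Require Import Defs.
From HB Require Import structures.
From mathcomp Require Import all_boot all_order all_algebra.
From mathcomp Require Import zify.

Set Implicit Arguments. Unset Strict Implicit. Unset Printing Implicit Defensive.
Import Order.TTheory GRing.Theory Num.Theory.
Local Open Scope ring_scope.

Section Gen.
Variables (V H : finType) (inv : H -> H) (eps : H -> V).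
Hypothesis Hinv : involutive inv.
Hypothesis Hfix : forall h, inv h != h.

Lemma edge_in h : edge_of inv h \in gedges inv.
Proof. by apply: imset_f. Qed.

Definition edgeF (h : H) : edge_t inv := exist _ (edge_of inv h) (edge_in h).

Lemma edge_ofC h : edge_of inv (inv h) = edge_of inv h.
Proof. by rewrite /edge_of Hinv setUC. Qed.

Lemma gedgesP e : e \in gedges inv -> exists g, e = edge_of inv g.
Proof. by case/imsetP=> g _ ->; exists g. Qed.

Lemma mem_edge_inv e b : e \in gedges inv -> (inv b \in e) = (b \in e).
Proof.
case/gedgesP=> g ->; rewrite /edge_of !inE.
by rewrite (inv_eq Hinv) (inj_eq (can_inj Hinv)) orbC.
Qed.

Lemma mem_edge_eq e b : e \in gedges inv -> (b \in e) = (e == edge_of inv b).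
Proof.
case/gedgesP=> g ->; apply/idP/eqP => [|->]; last by rewrite /edge_of !inE eqxx.
by rewrite /edge_of !inE => /orP[] /eqP ->; rewrite // -/(edge_of inv (inv g)) edge_ofC.
Qed.

Lemma mem_edgeE (e : edge_t inv) b : (b \in val e) = (e == edgeF b).
Proof. by case: e => e He /=; rewrite mem_edge_eq. Qed.

Lemma mem_edge_self b : b \in edge_of inv b.
Proof. by rewrite /edge_of !inE eqxx. Qed.

Lemma edge_of_eq b c : edge_of inv b = edge_of inv c -> b = c \/ b = inv c.
Proof.
move=> e; have := mem_edge_self b; rewrite e /edge_of !inE.
by case/orP=> /eqP ->; [left|right].
Qed.

Fixpoint conn (u : V) (ds : seq H) (w : V) : bool :=
  if ds is b :: ds' then (eps b == u) && conn (eps (inv b)) ds' w else u == w.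

Lemma conn_cat u s1 s2 w :
  conn u (s1 ++ s2) w <-> exists m, conn u s1 m /\ conn m s2 w.
Proof.
elim: s1 u => [|b s1 IH] u /=.
  split; first by move=> h; exists u; rewrite eqxx.
  by case=> m [/eqP -> ].
split.
  case/andP=> /eqP e /IH [m [h1 h2]]; exists m; by rewrite e eqxx h1.
case=> m [/andP [e h1] h2]; rewrite e /=; apply/IH; by exists m.
Qed.

Lemma conn_catI u m s1 s2 w : conn u s1 m -> conn m s2 w -> conn u (s1 ++ s2) w.
Proof. by move=> h1 h2; apply/conn_cat; exists m. Qed.

Lemma conn_rev u s w : conn u s w -> conn w (map inv (rev s)) u.
Proof.
elim: s u => [|b s IH] u /=; first by rewrite eq_sym.
case/andP=> /eqP e h; rewrite rev_cons -cats1 map_cat.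
apply: (conn_catI (IH _ h)) => /=.
by rewrite eqxx Hinv e eqxx.
Qed.

Definition closedd ds := ds = [::] \/ exists u, conn u ds u.

Lemma closedd_rot s1 s2 : closedd (s1 ++ s2) -> closedd (s2 ++ s1).
Proof.
case=> [/eqP|[u /conn_cat [m [h1 h2]]]]; last by right; exists m; apply: conn_catI h2 h1.
by case: s1 => //; case: s2 => // _; left.
Qed.

Lemma conn_tele (v : V) u ds w : conn u ds w ->
  \sum_(b <- ds) (((eps b == v)%:R - (eps (inv b) == v)%:R) : int) =
  (u == v)%:R - (w == v)%:R.
Proof.
elim: ds u => [|b ds IH] u /=; first by move/eqP->; rewrite big_nil subrr.
case/andP=> /eqP e h; rewrite big_cons (IH _ h) e.
by rewrite addrA subrK.
Qed.

Definition sgn (D : H -> bool) (b : H) : int := if D b then 1 else -1.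

Lemma sgn_inv D b : orientation inv D -> sgn D (inv b) = - sgn D b.
Proof. by move=> oD; rewrite /sgn oD; case: (D b). Qed.

Lemma sgn_sq D b : sgn D b * sgn D b = 1.
Proof. by rewrite /sgn; case: (D b); rewrite ?mulr1 ?mulrNN ?mulr1. Qed.

Definition sigd (D : H -> bool) (ds : seq H) : {ffun edge_t inv -> int} :=
  [ffun e : edge_t inv => \sum_(b <- ds | b \in val e) sgn D b].

Lemma sigd_cat D s1 s2 : sigd D (s1 ++ s2) = sigd D s1 + sigd D s2.
Proof. by apply/ffunP=> e; rewrite !ffunE big_cat. Qed.

Lemma sigd_nil D : sigd D [::] = 0.
Proof. by apply/ffunP=> e; rewrite !ffunE big_nil. Qed.

Lemma sigd_cons D b s : sigd D (b :: s) = sigd D [:: b] + sigd D s.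
Proof. by rewrite -sigd_cat. Qed.

Lemma sigd_pair D b : orientation inv D -> sigd D [:: b; inv b] = 0.
Proof.
move=> oD; apply/ffunP=> e; rewrite !ffunE !big_cons big_nil.
rewrite mem_edge_inv; last by case: e.
by case: (b \in val e); rewrite ?addr0 // sgn_inv // addrN.
Qed.

Lemma sigd_rev D s : orientation inv D -> sigd D (map inv (rev s)) = - sigd D s.
Proof.
move=> oD; apply/ffunP=> e; rewrite !ffunE big_map big_rev -sumrN.
apply: eq_big => [b|b _]; first by rewrite mem_edge_inv //; case: e.
by rewrite sgn_inv.
Qed.

Lemma sigma_sigd D W : sigma inv D W = sigd D (map snd W).
Proof. by apply/ffunP=> e; rewrite !ffunE big_map. Qed.

Lemma inc_sgn D v b : orientation inv D ->
  incidence eps D v (edgeF b) * (sgn D b)%:~R =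
  (eps b == v)%:R - (eps (inv b) == v)%:R.
Proof.
move=> oD; rewrite /incidence /=.
case: pickP => [t /andP [tin Dt]|none].
  have [et|et] : t = b \/ t = inv b.
    by move: tin; rewrite /edge_of !inE => /orP[] /eqP ->; [left|right].
  - subst t; rewrite /sgn Dt mulr1.
    by case: (eps b == v); case: (eps (inv b) == v); rewrite /= ?subrr ?sub0r ?subr0.
  - subst t; move: Dt; rewrite oD /sgn => /negbTE ->; rewrite Hinv.
    by case: (eps b == v); case: (eps (inv b) == v);
      rewrite /= ?subrr ?sub0r ?subr0 ?mulr0 ?mulN1r ?mulrN1 ?opprK.
exfalso; case Db: (D b).
  by move: (none b); rewrite mem_edge_self Db.
by move: (none (inv b)); rewrite /edge_of !inE eqxx orbT oD Db.
Qed.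

Lemma intr_sum (I : Type) (r : seq I) (P : pred I) (F : I -> int) :
  ((\sum_(i <- r | P i) F i)%:~R : rat) = \sum_(i <- r | P i) (F i)%:~R.
Proof. exact: (big_morph (fun z : int => (z%:~R : rat)) (@intrD _) (mulr0z _)). Qed.

Definition sigQ D ds : {ffun edge_t inv -> rat^o} := [ffun e => ((sigd D ds e)%:~R : rat)].

Lemma conservation D ds : orientation inv D -> closedd ds ->
  in_cycle_space eps D (sigQ D ds).
Proof.
move=> oD [->|[u cu]] v.
  by rewrite big1 // => e _; rewrite !ffunE big_nil mulr0.
under eq_bigr => e _ do rewrite ffunE /= ffunE intr_sum mulr_sumr big_mkcond /=.
rewrite exchange_big /=.
rewrite (eq_bigr (fun b => incidence eps D v (edgeF b) * (sgn D b)%:~R)).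
  under eq_bigr => b _ do rewrite inc_sgn //.
  have := conn_tele v cu; rewrite subrr => h.
  have := congr1 (fun z : int => (z%:~R : rat)) h; rewrite intr_sum /= mulr0z => e.
  rewrite -[RHS]e; apply: eq_bigr => b _.
  by case: (eps b == v); case: (eps (inv b) == v).
move=> b _; rewrite (eq_bigr (fun e => if e == edgeF b then
   incidence eps D v e * (sgn D b)%:~R else 0)).
  by rewrite -big_mkcond big_pred1_eq.
by move=> e _; rewrite mem_edgeE.
Qed.

End Gen.

Set Implicit Arguments. Unset Strict Implicit. Unset Printing Implicit Defensive.
Import Order.TTheory GRing.Theory Num.Theory.
Local Open Scope ring_scope.

Section Gen2.
Variables (V H : finType) (inv : H -> H) (eps : H -> V).
Hypothesis Hinv : involutive inv.
Hypothesis Hfix : forall h, inv h != h.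

Local Notation conn := (conn inv eps).
Local Notation closedd := (closedd inv eps).

Fixpoint mkWa (x : H) (ds : seq H) : seq (H * H) :=
  if ds is b :: ds' then (x, b) :: mkWa (inv b) ds' else [::].
Definition mkW ds := if ds is b :: ds' then mkWa (inv (last b ds')) ds else [::].

Lemma mkWa_snd x ds : map snd (mkWa x ds) = ds.
Proof. by elim: ds x => //= b ds IH x; rewrite IH. Qed.

Lemma mkW_snd ds : map snd (mkW ds) = ds.
Proof. by case: ds => //= b ds; rewrite mkWa_snd. Qed.

Lemma mkWa_fst x ds : map fst (mkWa x ds) = belast x (map inv ds).
Proof. by elim: ds x => //= b ds IH x; rewrite IH. Qed.

Lemma mkWa_eps u x ds w : conn u ds w -> eps x = u ->
  all (fun p => eps p.1 == eps p.2) (mkWa x ds).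
Proof.
elim: ds u x => //= b ds IH u x /andP [/eqP eb c] ex.
by rewrite ex eb eqxx /= (IH _ _ c).
Qed.

Lemma conn_last u ds w : conn u ds w -> w = last u [seq eps (inv b) | b <- ds].
Proof. by elim: ds u => [|b ds IH] u /=; [move/eqP | case/andP=> _ /IH]. Qed.

Lemma mkW_rot ds :
  map fst (rot 1 (mkW ds)) = map (fun p => inv p.2) (mkW ds).
Proof.
case: ds => //= b ds; rewrite rot1_cons map_rcons mkWa_fst.
have -> : [seq inv p.2 | p <- mkWa (inv b) ds] = map inv ds by rewrite -{2}(mkWa_snd (inv b) ds) -map_comp.
by rewrite lastI last_map.
Qed.

Lemma mkW_closed ds : closedd ds -> all (fun p => p.1 != p.2) (mkW ds) ->
  closed_walk inv eps (mkW ds).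
Proof.
move=> [->|[u cu]] hne //; rewrite /closed_walk mkW_rot eqxx andbT.
apply/allP=> p pin; rewrite /dtransition (allP hne p pin) /=.
case: ds cu pin {hne} => //= b ds /[dup] cu /andP [/eqP eb c] pin.
have ha := @mkWa_eps u (inv (last b ds)) (b :: ds) u cu.
apply: (allP (ha _)) pin.
by rewrite (conn_last c) (last_map (fun b => eps (inv b))).
Qed.

Lemma mkWa_bad x ds p : p \in mkWa x ds -> p.1 = p.2 ->
  (exists s, ds = x :: s) \/ exists pre c post, ds = pre ++ c :: inv c :: post.
Proof.
elim: ds x => //= b ds IH x; rewrite inE => /orP [/eqP -> /= ->|pin e].
  by left; exists ds.
right; case: (IH _ pin e) => [[s ->]|[pre [c [post ->]]]].
  by exists [::], b, s.
by exists (b :: pre), c, post.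
Qed.

Lemma walk_conn (W : seq (H * H)) x :
  all (fun p => eps p.1 == eps p.2) W ->
  map fst W = belast x (map (fun p => inv p.2) W) ->
  conn (eps x) (map snd W) (eps (last x (map (fun p => inv p.2) W))).
Proof.
elim: W x => [|p W IH] x /=; first by rewrite eqxx.
case/andP=> /eqP ep hall [e1 e2].
by rewrite -e1 -ep eqxx /= (IH _ hall e2).
Qed.

Lemma closed_closedd W : closed_walk inv eps W -> closedd (map snd W).
Proof.
case: W => [|p W]; first by left.
case/andP=> hall /eqP; rewrite rot1_cons map_rcons /= => e.
have := lastI (inv p.2) (map (fun p => inv p.2) W); rewrite -e => /rcons_inj [e1 e2].
right; exists (eps p.2) => /=; rewrite eqxx /=.
have hall' : all (fun p => eps p.1 == eps p.2) W.
  by apply/allP=> q qin; have /andP [] := allP hall q (mem_behead (s := p :: W) qin).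
have ep : eps p.1 = eps p.2 by have /andP [_ /eqP] := allP hall p (mem_head _ _).
have := walk_conn hall' e1; rewrite -e2 ep; exact.
Qed.

Lemma halfedges_perm (W : seq (H * H)) :
  perm_eq (halfedges W) (map fst W ++ map snd W).
Proof.
elim: W => //= p W IH; rewrite /halfedges /= -/(halfedges W) perm_cons.
apply: (perm_trans (_ : perm_eq _ (p.2 :: (map fst W ++ map snd W)))).
  by rewrite perm_cons.
by rewrite -cat1s perm_catCA /=.
Qed.

Lemma closed_fst W : closed_walk inv eps W ->
  perm_eq (map fst W) (map inv (map snd W)).
Proof.
case/andP=> _ /eqP e; rewrite -map_comp.
have <- : map fst (rot 1 W) = map (inv \o snd) W by rewrite e.
by rewrite map_rot perm_sym perm_rot.
Qed.

Lemma circuit_uniq C : circuit inv eps C -> uniq (map snd C).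
Proof.
case/and3P=> _ _ u; move: u; rewrite (perm_uniq (halfedges_perm C)) cat_uniq.
by case/and3P.
Qed.

Lemma circuit_inv C b : circuit inv eps C -> b \in map snd C -> inv b \notin map snd C.
Proof.
case/and3P=> cw _ u bin; move: u; rewrite (perm_uniq (halfedges_perm C)) cat_uniq.
case/and3P=> _ /hasPn h _; apply/negP => ib; have := h _ ib.
by rewrite /= (perm_mem (closed_fst cw)) (mem_map (can_inj Hinv)) bin.
Qed.

Lemma circuit_half C b : circuit inv eps C -> b \in halfedges C ->
  b \in map snd C \/ inv b \in map snd C.
Proof.
case/and3P=> cw _ _; rewrite (perm_mem (halfedges_perm C)) mem_cat.
case/orP=> [|->]; last by left.
rewrite (perm_mem (closed_fst cw)) => /mapP [c cin ->]; right; by rewrite Hinv.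
Qed.

End Gen2.

Set Implicit Arguments. Unset Strict Implicit. Unset Printing Implicit Defensive.
Import Order.TTheory GRing.Theory Num.Theory.
Local Open Scope ring_scope.

Lemma inc_edge (V H : finType) (inv : H -> H) (eps : H -> V) D v (e : edge_t inv) g :
  involutive inv -> orientation inv D -> val e = edge_of inv g ->
  incidence eps D v e = (let t := if D g then g else inv g in
     if (eps t == v) && (eps (inv t) != v) then 1
     else if (eps (inv t) == v) && (eps t != v) then -1 else 0).
Proof.
move=> Hinv oD ee; rewrite /incidence ee.
case: pickP => [t /andP [tin Dt]|none].
  have -> : t = if D g then g else inv g.
    move: tin; rewrite /edge_of !inE => /orP[] /eqP et; subst t.
      by rewrite Dt.
    by move: Dt; rewrite oD => /negbTE ->.
  by [].
exfalso; case Dg: (D g).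
  by move: (none g); rewrite mem_edge_self Dg.
by move: (none (inv g)); rewrite /edge_of !inE eqxx orbT oD Dg.
Qed.

Section Del.
Variables (V H : finType) (inv : H -> H) (eps : H -> V) (E : {set {set H}}).
Hypothesis Hinv : involutive inv.
Hypothesis Hfix : forall h, inv h != h.

Local Notation dH := (del_H inv E).
Local Notation dinv := (del_inv inv E).
Local Notation deps := (del_eps inv eps E).

Lemma val_dinv (h : dH) : val (dinv h) = inv (val h).
Proof.
have hP : edge_of inv (inv (val h)) \notin E by rewrite edge_ofC //; exact: (valP h).
by rewrite /del_inv insubdK.
Qed.

Lemma dinv_inv : involutive dinv.
Proof. by move=> h; apply: val_inj; rewrite !val_dinv Hinv. Qed.

Lemma dinv_fix (h : dH) : dinv h != h.
Proof. by rewrite -(inj_eq val_inj) val_dinv Hfix. Qed.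

Lemma dgraph : is_graph dinv.
Proof. split; [exact: dinv_inv | exact: dinv_fix]. Qed.

Lemma lift_closed W' : closed_walk dinv deps W' <-> closed_walk inv eps (lift_walk inv E W').
Proof.
rewrite /closed_walk /lift_walk all_map -map_rot.
have -> : [seq p.1 | p <- [seq (val p.1, val p.2) | p <- rot 1 W']] =
          map val [seq p.1 | p <- rot 1 W'] by rewrite -!map_comp.
have -> : [seq inv p.2 | p <- [seq (val p.1, val p.2) | p <- W']] =
          map val [seq dinv p.2 | p <- W'].
  by rewrite -!map_comp; apply: eq_map => p /=; rewrite val_dinv.
rewrite (inj_eq (inj_map val_inj)).
have -> : all (preim (fun p => (val p.1, val p.2)) (dtransition eps)) W' = all (dtransition deps) W'.
  by apply: eq_all => p; rewrite /dtransition /= (inj_eq val_inj).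
by [].
Qed.

Definition Dl (D : H -> bool) : dH -> bool := fun h => D (val h).

Lemma Dl_orient D : orientation inv D -> orientation dinv (Dl D).
Proof. by move=> oD h; rewrite /Dl val_dinv oD. Qed.

Lemma liftE_in (e' : edge_t dinv) : [set val x | x in val e'] \in gedges inv.
Proof.
case: e' => e' /= /gedgesP [g' ->].
rewrite /edge_of imsetU1 imset_set1 val_dinv; exact: edge_in.
Qed.

Definition liftE (eo : edge_t dinv) : edge_t inv := exist (fun e => e \in gedges inv) _ (liftE_in eo).

Lemma liftE_val (e' : edge_t dinv) g' : val e' = edge_of dinv g' ->
  val (liftE e') = edge_of inv (val g').
Proof. by move=> /= ->; rewrite /edge_of imsetU1 imset_set1 val_dinv. Qed.

Lemma liftE_notE e' : val (liftE e') \notin E.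
Proof.
case: (gedgesP (valP e')) => g' eg; rewrite (liftE_val eg); exact: (valP g').
Qed.

Lemma liftE_inj : injective liftE.
Proof.
move=> e1 e2 /(congr1 val) /= /(imset_inj val_inj) e; exact: val_inj.
Qed.

Lemma liftE_fiber (e : edge_t inv) : val e \notin E ->
  exists e0, liftE e0 = e /\ forall e', (liftE e' == e) = (e' == e0).
Proof.
case: (gedgesP (valP e)) => g eg nE.
have gP : edge_of inv g \notin E by rewrite -eg.
pose g' : dH := Sub g gP.
have He : liftE (edgeF dinv g') = e by apply: val_inj; rewrite (@liftE_val _ g') //= eg.
exists (edgeF dinv g'); split => // e'; by rewrite -He (inj_eq liftE_inj).
Qed.

Definition Lift (R : zmodType) (x : {ffun edge_t dinv -> R}) : {ffun edge_t inv -> R} :=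
  [ffun e => \sum_(e' | liftE e' == e) x e'].

Lemma fiber_sumE (R : zmodType) (e : edge_t inv) (F : edge_t dinv -> R) :
  val e \in E -> \sum_(e' | liftE e' == e) F e' = 0.
Proof.
move=> eE; rewrite big_pred0 // => e'; apply/eqP => h.
by move: (liftE_notE e'); rewrite h eE.
Qed.

Lemma fiber_sum (R : zmodType) (e : edge_t inv) (F : edge_t dinv -> R) :
  val e \notin E -> exists e0, liftE e0 = e /\ \sum_(e' | liftE e' == e) F e' = F e0.
Proof.
case/liftE_fiber=> e0 [h1 h2]; exists e0; split => //.
by rewrite (eq_bigl _ _ h2) big_pred1_eq.
Qed.

Lemma Lift_sigma D W' : orientation inv D ->
  sigma inv D (lift_walk inv E W') = Lift (sigma dinv (Dl D) W').
Proof.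
move=> oD; apply/ffunP=> e; rewrite !ffunE /lift_walk big_map /=.
case: (boolP (val e \in E)) => eE.
  rewrite fiber_sumE // big1 // => p.
  rewrite (mem_edge_eq Hinv); last exact: valP.
  by move/eqP=> h; move: (valP p.2); rewrite -h eE.
case: (fiber_sum (fun e' => sigma dinv (Dl D) W' e') eE) => e0 [<- ->].
rewrite ffunE; apply: eq_bigl => p /=.
by rewrite (mem_imset _ _ val_inj).
Qed.

Lemma Lift_sum (I : Type) (r : seq I) (F : I -> {ffun edge_t dinv -> int}) (c : I -> int) :
  Lift (\sum_(i <- r) F i *~ c i) = \sum_(i <- r) Lift (F i) *~ c i.
Proof.
apply/ffunP=> e; rewrite !ffunE sum_ffunE.
under eq_bigr => e' _ do rewrite sum_ffunE.
rewrite exchange_big; apply: eq_bigr => i _.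
by rewrite ffunMzE ffunE mulrz_suml; apply: eq_bigr => e0 _; rewrite ffunMzE.
Qed.

Lemma ffunZE (I : finType) (f : {ffun I -> rat^o}) (k : rat) x : (k *: f) x = k *: f x.
Proof. exact: ffunE. Qed.

Lemma Lift_lin (n : nat) (F : 'I_n -> {ffun edge_t dinv -> rat^o}) (c : 'I_n -> rat) :
  Lift (\sum_(i < n) c i *: F i) = \sum_(i < n) c i *: Lift (F i).
Proof.
apply/ffunP=> e; rewrite !ffunE sum_ffunE.
under eq_bigr => e' _ do rewrite sum_ffunE.
rewrite exchange_big; apply: eq_bigr => i _.
by rewrite ffunZE ffunE scaler_sumr; apply: eq_bigr => e0 _; rewrite ffunZE.
Qed.

Definition Res (y : {ffun edge_t inv -> rat^o}) : {ffun edge_t dinv -> rat^o} :=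
  [ffun e' => y (liftE e')].

Lemma Lift_Res (y : {ffun edge_t inv -> rat^o}) : (forall e, val e \in E -> y e = 0) -> Lift (Res y) = y.
Proof.
move=> y0; apply/ffunP=> e; rewrite ffunE.
case: (boolP (val e \in E)) => eE; first by rewrite fiber_sumE // y0.
by case: (fiber_sum (Res y) eE) => e0 [<- ->]; rewrite ffunE.
Qed.

Lemma inc_lift D v e' : orientation inv D ->
  incidence deps (Dl D) v e' = incidence eps D v (liftE e').
Proof.
move=> oD; case: (gedgesP (valP e')) => g' eg.
rewrite (inc_edge _ _ dinv_inv (Dl_orient oD) eg).
rewrite (inc_edge _ _ Hinv oD (liftE_val eg)) /= /Dl /del_eps.
by case: (D (val g')); rewrite /= ?val_dinv ?dinv_inv ?Hinv.
Qed.

Lemma Res_cycle D (y : {ffun edge_t inv -> rat^o}) : orientation inv D -> in_cycle_space eps D y ->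
  (forall e, val e \in E -> y e = 0) -> in_cycle_space deps (Dl D) (Res y).
Proof.
move=> oD cy y0 v; rewrite -[RHS](cy v).
under eq_bigr => e' _ do rewrite inc_lift // ffunE.
rewrite (partition_big liftE xpredT) //=; apply: eq_bigr => e _.
rewrite -{2}(Lift_Res y0) ffunE mulr_sumr.
by apply: eq_bigr => e' /eqP <-; rewrite ffunE.
Qed.

Lemma lift_exists (W : seq (H * H)) :
  (forall p, p \in W -> edge_of inv p.1 \notin E /\ edge_of inv p.2 \notin E) ->
  exists W', lift_walk inv E W' = W.
Proof.
elim: W => [|p W IH] h; first by exists [::].
case: IH => [q qin|W' e]; first by apply: h; rewrite inE qin orbT.
case: (h p (mem_head _ _)) => h1 h2.
by exists (((Sub p.1 h1 : dH), (Sub p.2 h2 : dH)) :: W'); rewrite /= e; case: p {h h1 h2}.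
Qed.

End Del.

Set Implicit Arguments. Unset Strict Implicit. Unset Printing Implicit Defensive.
Import Order.TTheory GRing.Theory Num.Theory.
Local Open Scope ring_scope.

Definition intc (H : finType) (inv : H -> H) (B : seq (H * H) -> Prop) (D : H -> bool)
  (v : {ffun edge_t inv -> int}) :=
  exists l : seq (seq (H * H) * int),
    (forall p, p \in l -> B p.1) /\ v = \sum_(p <- l) sigma inv D p.1 *~ p.2.

Arguments intc {H} inv B D v.

Section IntC.
Variables (H : finType) (inv : H -> H) (D : H -> bool).

Lemma intc0 B : intc inv B D 0.
Proof. by exists [::]; rewrite big_nil. Qed.

Lemma intc1 (B : seq (H * H) -> Prop) W : B W -> intc inv B D (sigma inv D W).
Proof.
move=> bW; exists [:: (W, 1)]; split; first by move=> p; rewrite inE => /eqP ->.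
by rewrite big_seq1.
Qed.

Lemma intcD B v1 v2 : intc inv B D v1 -> intc inv B D v2 -> intc inv B D (v1 + v2).
Proof.
move=> [l1 [h1 ->]] [l2 [h2 ->]]; exists (l1 ++ l2); split; last by rewrite big_cat.
by move=> p; rewrite mem_cat => /orP [] /[dup] ?; [apply: h1 | apply: h2].
Qed.

Lemma intcZ B v k : intc inv B D v -> intc inv B D (v *~ k).
Proof.
move=> [l [h ->]]; exists [seq (p.1, p.2 * k) | p <- l]; split.
  move=> p /mapP [q qin ep]; rewrite ep /=; exact: h.
by rewrite big_map mulrz_suml; apply: eq_bigr => p _; rewrite mulrzA.
Qed.

Lemma intcN B v : intc inv B D v -> intc inv B D (- v).
Proof. by move/(intcZ (-1)); rewrite mulrNz mulr1z. Qed.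

Lemma intc_mono (B B' : seq (H * H) -> Prop) v :
  (forall W, B W -> B' W) -> intc inv B D v -> intc inv B' D v.
Proof. by move=> hB [l [h ->]]; exists l; split => // p /h /hB. Qed.

Lemma intc_bind (B B' : seq (H * H) -> Prop) v :
  (forall W, B W -> intc inv B' D (sigma inv D W)) -> intc inv B D v -> intc inv B' D v.
Proof.
move=> hB [l [h ->]]; elim: l h => [|p l IH] h; first by rewrite big_nil; exact: intc0.
rewrite big_cons; apply: intcD; last by apply: IH => q qin; apply: h; rewrite inE qin orbT.
by apply: intcZ; apply: hB; apply: h; rewrite mem_head.
Qed.

Lemma intc_of_wrt (B : seq (H * H) -> Prop) v (s : seq (seq (H * H))) (c : nat -> int) :
  (forall W, W \in s -> B W) -> v = \sum_(i < size s) sigma inv D (nth [::] s i) *~ c i ->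
  intc inv B D v.
Proof.
move=> hs ->; exists [seq (nth [::] s i, c i) | i <- iota 0 (size s)]; split.
  move=> p /mapP [i]; rewrite mem_iota add0n => /andP [_ ilt] ep; rewrite ep /=; apply: hs; exact: mem_nth.
have -> : iota 0 (size s) = index_iota 0 (size s) by rewrite /index_iota subn0.
by rewrite big_map big_mkord.
Qed.

Lemma wrt_of_intc (B : seq (H * H) -> Prop) v : intc inv B D v ->
  exists (s : seq (seq (H * H))) (c : nat -> int),
    (forall W, W \in s -> B W) /\ v = \sum_(i < size s) sigma inv D (nth [::] s i) *~ c i.
Proof.
move=> [l [h ->]]; exists (map fst l), (fun i => nth 0 (map snd l) i); split.
  by move=> W /mapP [p pin ->]; apply: h.
rewrite size_map (big_nth ([::], 0)) big_mkord; apply: eq_bigr => i _.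
by rewrite (nth_map ([::], 0)) // (nth_map ([::], 0)).
Qed.

End IntC.

Lemma basis_extract (K : fieldType) (vT : vectType K) (X : seq vT) :
  exists m : bitseq, free (mask m X) /\ (<<mask m X>> = <<X>>)%VS.
Proof.
elim: X => [|x X [m [fm sm]]]; first by exists [::]; rewrite /= nil_free.
case: (boolP (x \in <<mask m X>>%VS)) => xin.
  exists (false :: m); split => //=.
  rewrite span_cons sm; apply/eqP; rewrite eqEsubv addvSr /= subv_add subvv andbT.
  by rewrite -memvE -sm.
exists (true :: m); split; first by rewrite /= free_cons xin fm.
by rewrite /= !span_cons sm.
Qed.

Set Implicit Arguments. Unset Strict Implicit. Unset Printing Implicit Defensive.
Import Order.TTheory GRing.Theory Num.Theory.
Local Open Scope ring_scope.

Section Main.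
Variables (V H : finType) (inv : H -> H) (eps : H -> V) (E : {set {set H}})
  (P : seq (seq (H * H))).
Hypothesis Hinv : involutive inv.
Hypothesis Hfix : forall h, inv h != h.
Hypothesis HP : circuit_partition inv eps P.
Hypothesis Htr : forall W, W \in P -> (#|[set e in E | traverses W e]| <= 1)%N.

Local Notation conn := (conn inv eps).
Local Notation closedd := (closedd inv eps).
Local Notation PB := (fun W : seq (H * H) => W \in P).

Definition Cof b := nth [::] P (find (fun W => b \in halfedges W) P).

Lemma Cof_P b : Cof b \in P /\ b \in halfedges (Cof b).
Proof.
have hh : has (fun W => b \in halfedges W) P by rewrite has_count (HP.2 b).
split; [apply: mem_nth; rewrite -has_find; exact: hh | exact: (nth_find _ hh)].
Qed.

Lemma P_circ C : C \in P -> circuit inv eps C.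
Proof. exact: HP.1. Qed.

Lemma P_closed C : C \in P -> closed_walk inv eps C.
Proof. by move/P_circ/and3P => []. Qed.

Lemma trav_snd C d : d \in map snd C -> traverses C (edge_of inv d).
Proof. by case/mapP=> p pin ->; apply/hasP; exists p => //; exact: mem_edge_self. Qed.

Lemma circ_one C d1 d2 : C \in P -> d1 \in map snd C -> d2 \in map snd C ->
  edge_of inv d1 \in E -> edge_of inv d2 \in E -> edge_of inv d1 = edge_of inv d2.
Proof.
move=> CP h1 h2 e1 e2; have /card_le1_eqP h := Htr CP.
by apply: h; rewrite inE ?e1 ?e2 trav_snd.
Qed.

Lemma sigd_perm D s1 s2 : perm_eq s1 s2 -> sigd inv D s1 = sigd inv D s2.
Proof. by move=> pe; apply/ffunP=> e; rewrite !ffunE (perm_big _ pe). Qed.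

Lemma sigd1_inv D b : orientation inv D -> sigd inv D [:: inv b] = - sigd inv D [:: b].
Proof. by move=> oD; rewrite -(sigd_rev Hinv _ oD). Qed.

Lemma dart_repl D b : orientation inv D -> edge_of inv b \in E ->
  exists R, conn (eps b) R (eps (inv b)) /\
    (forall d, d \in R -> edge_of inv d \notin E) /\
    exists v, intc inv PB D v /\ sigd inv D [:: b] = sigd inv D R + v.
Proof.
move=> oD bE; case: (Cof_P b) => CP bh; have circ := P_circ CP.
have cl := closed_closedd (P_closed CP).
have un := circuit_uniq circ.
have vC : intc inv PB D (sigd inv D (map snd (Cof b))).
  by rewrite -sigma_sigd; exact: intc1.
case: (circuit_half Hinv circ bh) => bin.
- have [p1 [p2 e]] : exists p1 p2, map snd (Cof b) = p1 ++ b :: p2.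
    by case/splitPr: bin => p1 p2; exists p1, p2.
  have ibn := circuit_inv Hinv circ bin.
  have pr : perm_eq (map snd (Cof b)) (b :: (p2 ++ p1)) by rewrite e perm_catC.
  move: cl; rewrite e => /closedd_rot [//|[u /= /andP [/eqP eb cu]]].
  exists (map inv (rev (p2 ++ p1))); split; first by rewrite eb; apply: conn_rev.
  split.
    move=> d /mapP [d' d'in ->]; rewrite mem_rev in d'in; rewrite edge_ofC //.
    apply/negP => dE.
    have d'C : d' \in map snd (Cof b) by rewrite (perm_mem pr) inE d'in orbT.
    case: (edge_of_eq (circ_one CP d'C bin dE bE)) => ed; subst d'.
      by move: un; rewrite (perm_uniq pr) /= d'in.
    by rewrite d'C in ibn.
  exists (sigd inv D (map snd (Cof b))); split => //.
  by rewrite sigd_rev // (sigd_perm _ pr) (sigd_cons _ D b (p2 ++ p1)) addrCA addNr addr0.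
- have [p1 [p2 e]] : exists p1 p2, map snd (Cof b) = p1 ++ inv b :: p2.
    by case/splitPr: bin => p1 p2; exists p1, p2.
  have bn := circuit_inv Hinv circ bin; rewrite Hinv in bn.
  have pr : perm_eq (map snd (Cof b)) (inv b :: (p2 ++ p1)) by rewrite e perm_catC.
  move: cl; rewrite e => /closedd_rot [//|[u /= /andP [/eqP eb cu]]].
  exists (p2 ++ p1); split; first by rewrite Hinv -eb in cu.
  split.
    move=> d din; apply/negP => dE.
    have dC : d \in map snd (Cof b) by rewrite (perm_mem pr) inE din orbT.
    have ibE : edge_of inv (inv b) \in E by rewrite edge_ofC.
    case: (edge_of_eq (circ_one CP dC bin dE ibE)) => ed; subst d.
      by move: un; rewrite (perm_uniq pr) /= din.
    by rewrite Hinv in dC; rewrite dC in bn.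
  exists (- sigd inv D (map snd (Cof b))); split; first exact: intcN.
  by rewrite (sigd_perm _ pr) (sigd_cons _ D (inv b) (p2 ++ p1)) sigd1_inv // opprD opprK addrCA subrr addr0.
Qed.

Lemma step2 D ds : orientation inv D ->
  exists ds2, (forall u w, conn u ds w -> conn u ds2 w) /\
    (forall d, d \in ds2 -> edge_of inv d \notin E) /\
    exists v, intc inv PB D v /\ sigd inv D ds = sigd inv D ds2 + v.
Proof.
move=> oD; elim: ds => [|b ds [ds2 [hc [hn [v [iv ev]]]]]].
  exists [::]; split => //; split => //; exists 0; split; first exact: intc0.
  by rewrite sigd_nil addr0.
case: (boolP (edge_of inv b \in E)) => bE.
  case: (dart_repl oD bE) => R [cR [nR [v' [iv' ev']]]].
  exists (R ++ ds2); split.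
    move=> u w /= /andP [/eqP eb c]; apply: conn_catI (hc _ _ c); by rewrite -eb.
  split; first by move=> d; rewrite mem_cat => /orP [] ?; [exact: nR | exact: hn].
  exists (v' + v); split; first exact: intcD.
  by rewrite sigd_cons ev' ev sigd_cat addrACA.
exists (b :: ds2); split; first by move=> u w /= /andP [eb c]; rewrite eb hc.
split; first by move=> d; rewrite inE => /orP [/eqP -> //|]; exact: hn.
exists v; split => //; by rewrite sigd_cons ev [in RHS]sigd_cons addrA.
Qed.

Definition GW (W : seq (H * H)) := closed_walk inv eps W /\
  forall p, p \in W -> edge_of inv p.1 \notin E /\ edge_of inv p.2 \notin E.

Lemma reduce D n ds : orientation inv D -> (size ds <= n)%N -> closedd ds ->
  (forall d, d \in ds -> edge_of inv d \notin E) -> intc inv GW D (sigd inv D ds).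
Proof.
move=> oD; elim: n ds => [|n IH] ds.
  by rewrite leqn0 size_eq0 => /eqP -> _ _; rewrite sigd_nil; exact: intc0.
move=> sz cl nE.
case: (boolP (all (fun p => p.1 != p.2) (mkW inv ds))) => ha.
  have cw := mkW_closed cl ha.
  rewrite -{1}(mkW_snd inv ds) -sigma_sigd; apply: intc1; split => // p pin.
  have p2 : p.2 \in ds by rewrite -(mkW_snd inv ds); apply: map_f.
  have : p.1 \in map inv ds.
    have := map_f fst pin; rewrite (perm_mem (closed_fst cw)) mkW_snd; exact.
  case/mapP=> d din ->; rewrite edge_ofC //; split; exact: nE.
move: ha; rewrite -has_predC => /hasP [p pin /negPn /eqP pe].
case: ds sz cl nE pin => [//|b ds'] sz cl nE pin.
case: (mkWa_bad pin pe) => [[s [eb _]]|[pre [c [post es]]]].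
  move: eb sz cl nE; case/lastP: ds' {pin s} => [|y z].
    by move=> /= eb; move: (Hfix b); rewrite -eb eqxx.
  rewrite last_rcons => -> sz cl nE.
  have hp : sigd inv D [:: inv z] + sigd inv D [:: z] = 0.
    by rewrite addrC -sigd_cons sigd_pair.
  have -> : sigd inv D (inv z :: rcons y z) = sigd inv D y.
    by rewrite sigd_cons -cats1 sigd_cat addrCA addrA -addrA hp addr0.
  apply: IH.
  - by move: sz; rewrite /= size_rcons; lia.
  - case: cl => [//|[u /= /andP [/eqP ez c]]].
    move: c; rewrite Hinv -cats1 => /conn_cat [m [c1 /= /andP [/eqP ezm _]]].
    by right; exists m; rewrite -{1}ezm.
  - by move=> d din; apply: nE; rewrite inE mem_rcons inE din !orbT.
move: sz cl nE; rewrite es => sz cl nE.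
have -> : sigd inv D (pre ++ c :: inv c :: post) = sigd inv D (pre ++ post).
  rewrite !sigd_cat (_ : c :: inv c :: post = [:: c; inv c] ++ post) //.
  by rewrite sigd_cat sigd_pair // add0r.
apply: IH.
- by move: sz; rewrite !size_cat /=; lia.
- case: cl => [|[u /conn_cat [m [c1 /= /andP [/eqP ec /andP [_ c2]]]]]].
    by case: pre {es sz nE} => [|? ?] //=.
  rewrite Hinv ec in c2; right; exists u; exact: conn_catI c1 c2.
- by move=> d; rewrite mem_cat => /orP [] din; apply: nE; rewrite mem_cat ?din // !inE din !orbT.
Qed.

End Main.

Set Implicit Arguments. Unset Strict Implicit. Unset Printing Implicit Defensive.
Import Order.TTheory GRing.Theory Num.Theory.
Local Open Scope ring_scope.

Lemma ffunDE (I : finType) (f g : {ffun I -> rat^o}) x : (f + g) x = f x + g x.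
Proof. exact: ffunE. Qed.
Lemma ffunNE (I : finType) (f : {ffun I -> rat^o}) x : (- f) x = - f x.
Proof. exact: ffunE. Qed.
Lemma ffun0E (I : finType) x : (0 : {ffun I -> rat^o}) x = 0.
Proof. exact: ffunE. Qed.

Section Cyc.
Variables (V H : finType) (inv : H -> H) (eps : H -> V) (D : H -> bool).
Local Notation cyc := (@in_cycle_space V H inv eps D).

Lemma cyc0 : cyc 0.
Proof. by move=> v; apply: big1 => e _; rewrite ffun0E mulr0. Qed.

Lemma cycD x y : cyc x -> cyc y ->
  cyc (x + y).
Proof.
move=> hx hy v; rewrite (eq_bigr (fun e => incidence eps D v e * x e + incidence eps D v e * y e)).
  by rewrite big_split /= hx hy addr0.
by move=> e _; rewrite ffunDE mulrDr.
Qed.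

Lemma cycZ a x : cyc x -> cyc (a *: x).
Proof.
move=> hx v; rewrite (eq_bigr (fun e => a * (incidence eps D v e * x e))).
  by rewrite -mulr_sumr hx mulr0.
by move=> e _; rewrite ffunZE mulrCA.
Qed.

Lemma cycN x : cyc x -> cyc (- x).
Proof. by move/(cycZ (-1)); rewrite scaleN1r. Qed.

Lemma cyc_sum (I : Type) (r : seq I) (F : I -> {ffun edge_t inv -> rat^o}) :
  (forall i, cyc (F i)) -> cyc (\sum_(i <- r) F i).
Proof. by move=> hF; apply: (big_ind cyc) => //; [exact: cyc0 | exact: cycD]. Qed.

End Cyc.

Section Main2.
Variables (V H : finType) (inv : H -> H) (eps : H -> V) (E : {set {set H}})
  (P : seq (seq (H * H))).
Hypothesis Hinv : involutive inv.
Hypothesis Hfix : forall h, inv h != h.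
Hypothesis HP : circuit_partition inv eps P.
Hypothesis Htr : forall W, W \in P -> (#|[set e in E | traverses W e]| <= 1)%N.

Local Notation dinv := (del_inv inv E).
Local Notation deps := (del_eps inv eps E).

Definition GamPd (Gam : seq (del_H inv E * del_H inv E) -> Prop) (W : seq (H * H)) :=
  (exists W', Gam W' /\ W = lift_walk inv E W') \/ W \in P.

Lemma integral_main D Gam : orientation inv D ->
  integral_wrt dinv deps (Dl D) Gam ->
  forall W, closed_walk inv eps W -> intc inv (GamPd Gam) D (sigma inv D W).
Proof.
move=> oD hI.
have hGW : forall W, GW inv eps E W -> intc inv (GamPd Gam) D (sigma inv D W).
  move=> W [cw hp]; case: (lift_exists hp) => W' eW.
  have cw' : closed_walk dinv deps W' by apply/(lift_closed eps Hinv); rewrite eW.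
  case: (hI W' cw') => s [c [hs es]].
  case: (intc_of_wrt hs es) => l [hl el].
  rewrite -eW (Lift_sigma Hinv _ oD) el Lift_sum.
  exists [seq (lift_walk inv E p.1, p.2) | p <- l]; split.
    move=> p /mapP [q qin ep]; rewrite ep; left; exists q.1; split => //; exact: hl.
  by rewrite big_map; apply: eq_bigr => p _; rewrite /= (Lift_sigma Hinv _ oD).
move=> W cw; rewrite sigma_sigd.
case: (closed_closedd cw) => [e0|[u cu]].
  rewrite e0 sigd_nil; exact: intc0.
case: (step2 Hinv HP Htr (map snd W) oD) => ds2 [hc [hn [v [iv ev]]]].
rewrite ev; apply: intcD; last by apply: intc_mono iv => W' W'P; right.
apply: (intc_bind hGW).
apply: (reduce Hinv Hfix oD (leqnn _)) => //.
right; exists u; exact: hc _ _ cu.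
Qed.

Definition CE (e : edge_t inv) := nth [::] P (find (fun W => traverses W (val e)) P).

Lemma CE_P e : val e \in E ->
  CE e \in P /\ exists d, d \in map snd (CE e) /\ val e = edge_of inv d.
Proof.
move=> eE; case: (gedgesP (valP e)) => g eg.
have hh : has (fun W => traverses W (val e)) P.
  case: (Cof_P HP g) => CP gh; apply/hasP; exists (Cof P g) => //.
  case: (circuit_half Hinv (P_circ HP CP) gh) => gin; rewrite eg.
    exact: trav_snd.
  by rewrite -(edge_ofC Hinv); exact: trav_snd.
have CEP : CE e \in P by apply: mem_nth; rewrite -has_find.
split => //; have := nth_find [::] hh; rewrite -/(CE e) => /hasP [p pin pe].
exists p.2; split; first exact: map_f.
by apply/eqP; rewrite -(mem_edge_eq Hinv _ (valP e)).
Qed.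

Lemma CE_self D e : val e \in E -> exists d, sigma inv D (CE e) e = sgn D d.
Proof.
move=> eE; case: (CE_P eE) => CP [d [din ed]]; exists d.
rewrite sigma_sigd ffunE -big_filter.
have circ := P_circ HP CP.
have -> : [seq b <- map snd (CE e) | b \in val e] = [:: d].
  rewrite -(filter_pred1_uniq (circuit_uniq circ) din); apply: eq_in_filter => b bin.
  have : b != inv d.
    by apply: contraNneq (circuit_inv Hinv circ din) => <-.
  by rewrite ed /edge_of !inE => /negbTE ->; rewrite orbF.
by rewrite big_seq1.
Qed.

Lemma CE_other D e e0 : val e \in E -> val e0 \in E -> e0 != e ->
  sigma inv D (CE e) e0 = 0.
Proof.
move=> eE e0E ne; case: (CE_P eE) => CP [d [din ed]].
rewrite sigma_sigd ffunE big1_seq // => b /andP [be0 bin]; exfalso.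
have eb : val e0 = edge_of inv b by apply/eqP; rewrite -(mem_edge_eq Hinv _ (valP e0)).
have bE : edge_of inv b \in E by rewrite -eb.
have dE : edge_of inv d \in E by rewrite -ed.
have := circ_one Htr CP bin din bE dE; rewrite -eb -ed => /val_inj e'.
by rewrite e' eqxx in ne.
Qed.

Lemma sigmaQ_sigQ D W : sigmaQ inv D W = sigQ inv D (map snd W).
Proof. by rewrite /sigmaQ /sigQ sigma_sigd. Qed.

Lemma LiftQ D W' : orientation inv D ->
  Lift Hinv (sigmaQ dinv (Dl D) W') = sigmaQ inv D (lift_walk inv E W').
Proof.
move=> oD; apply/ffunP=> e; rewrite [RHS]ffunE (Lift_sigma Hinv _ oD) !ffunE intr_sum.
by apply: eq_bigr => e' _; rewrite ffunE.
Qed.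

Definition wsOf (s' : seq (seq (del_H inv E * del_H inv E))) :=
  map (lift_walk inv E) s' ++ map CE (enum (fun e : edge_t inv => val e \in E)).

Lemma span_main D s' : orientation inv D -> cycle_basis_wrt dinv deps (Dl D) s' ->
  (forall W, W \in wsOf s' -> closed_walk inv eps W) /\
  forall x, x \in <<map (sigmaQ inv D) (wsOf s')>>%VS <-> in_cycle_space eps D x.
Proof.
move=> oD [hcl _ _ hsp].
have hws : forall W, W \in wsOf s' -> closed_walk inv eps W.
  move=> W; rewrite mem_cat => /orP [/mapP [W' W'in ->]|/mapP [e ein ->]].
    by apply/(lift_closed eps Hinv); exact: (allP hcl).
  by rewrite mem_enum in ein; apply: (P_closed HP); case: (CE_P ein).
have cycW : forall W, W \in wsOf s' -> in_cycle_space eps D (sigmaQ inv D W).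
  move=> W Win; rewrite sigmaQ_sigQ; apply: (conservation Hinv oD); apply: closed_closedd; exact: hws.
split => // x; split.
  move=> xin; rewrite (coord_span (X := in_tuple (map (sigmaQ inv D) (wsOf s'))) xin).
  apply: cyc_sum => i; apply: cycZ.
  have : (in_tuple (map (sigmaQ inv D) (wsOf s')))`_i \in map (sigmaQ inv D) (wsOf s').
    by apply: mem_nth; exact: ltn_ord.
  by case/mapP=> W Win ->; exact: cycW.
move=> cx.
pose z := \sum_(e | val e \in E) ((x e * (sigma inv D (CE e) e)%:~R) *: sigmaQ inv D (CE e)).
have zin : z \in <<map (sigmaQ inv D) (wsOf s')>>%VS.
  apply: memv_suml => e eE; apply: memvZ; apply: memv_span; apply: map_f.
  by rewrite mem_cat; apply/orP; right; apply: map_f; rewrite mem_enum.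
have zc : in_cycle_space eps D z.
  apply: (big_ind (in_cycle_space eps D)); [exact: cyc0 | exact: cycD |].
  move=> e eE; apply: cycZ; apply: cycW.
  by rewrite mem_cat; apply/orP; right; apply: map_f; rewrite mem_enum.
have y0 : forall e0, val e0 \in E -> (x - z) e0 = 0.
  move=> e0 e0E; rewrite ffunDE ffunNE /z sum_ffunE (bigD1 e0) //= ffunZE.
  rewrite big1; last first.
    move=> e /andP [eE ne]; rewrite ffunZE /sigmaQ [X in _ *: X]ffunE (CE_other _ eE e0E); last by rewrite eq_sym.
    by rewrite mulr0z scaler0.
  rewrite /sigmaQ [X in _ *: X]ffunE; case: (CE_self D e0E) => d ->.
  have sc : forall a b : rat, (a *: (b : rat^o)) = a * b by [].
  by rewrite sc addr0 -mulrA -intrM sgn_sq mulr1 subrr.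
have yc : in_cycle_space eps D (x - z) by apply: cycD cx (cycN zc).
have rc := Res_cycle Hinv oD yc y0.
have rin := (hsp (Res E Hinv (x - z))).2 rc.
have -> : x = (x - z) + z by rewrite subrK.
apply: memvD zin.
rewrite -(Lift_Res Hinv y0) (coord_span (X := in_tuple (map (sigmaQ dinv (Dl D)) s')) rin) Lift_lin.
apply: memv_suml => i _; apply: memvZ; apply: memv_span.
have : (in_tuple (map (sigmaQ dinv (Dl D)) s'))`_i \in map (sigmaQ dinv (Dl D)) s'.
  by apply: mem_nth; exact: ltn_ord.
case/mapP=> W' W'in ->; rewrite LiftQ //; apply: map_f.
by rewrite mem_cat map_f.
Qed.

End Main2.

Local Close Scope ring_scope.

Theorem mainTheorem6 (V H : finType) (inv : H -> H) (eps : H -> V)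
  (E : {set {set H}}) (P : seq (seq (H * H)))
  (Gam : seq (del_H inv E * del_H inv E) -> Prop) :
  is_graph inv ->
  four_regular eps ->
  E \subset gedges inv ->
  circuit_partition inv eps P ->
  (forall W, W \in P -> (#|[set e in E | traverses W e]| <= 1)%N) ->
  let GamP := fun W : seq (H * H) =>
    (exists W', Gam W' /\ W = lift_walk inv E W') \/ W \in P in
  (cycle_spanning (del_inv inv E) (del_eps inv eps E) Gam ->
     cycle_spanning inv eps GamP) /\
  (integral_cycle_spanning (del_inv inv E) (del_eps inv eps E) Gam ->
     integral_cycle_spanning inv eps GamP).
Proof.
move=> [Hinv Hfix] _ HE HP Htr GamP.
have part1 : cycle_spanning (del_inv inv E) (del_eps inv eps E) Gam ->
    cycle_spanning inv eps GamP.
  move=> hG D oD; have oD' := Dl_orient (E := E) Hinv oD.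
  case: (hG _ oD') => hcl [s' [hs' hb]].
  have hclP : forall W, GamP W -> closed_walk inv eps W.
    move=> W [[W' [gW' ->]]|WP].
      by apply/(lift_closed eps Hinv); exact: hcl.
    exact: (P_closed HP).
  split => //.
  case: (span_main Hinv HP Htr oD hb) => hws hspan.
  case: (basis_extract (map (sigmaQ inv D) (wsOf P s'))) => m [fm sm].
  exists (mask m (wsOf P s')); split.
    move=> W /mem_mask; rewrite mem_cat => /orP [/mapP [W' W'in ->]|/mapP [e ein ->]].
      by left; exists W'; split => //; exact: hs'.
    by right; rewrite mem_enum in ein; case: (CE_P Hinv HP ein).
  split.
  - by apply/allP => W /mem_mask; exact: hws.
  - by rewrite map_mask; exact: free_uniq.
  - by rewrite map_mask.
  - by move=> x; rewrite map_mask sm; exact: hspan.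
split => //.
case=> hG hI; split; first exact: part1.
move=> D oD W cw.
exact: (wrt_of_intc (integral_main Hinv Hfix HP Htr oD (hI _ (Dl_orient (E := E) Hinv oD)) cw)).
Qed.
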